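(* Let $n\ge2$ and $Q\in SU_n$ with eigenvalues $\mu_1,\dots,\mu_n$ (with multiplicity) ordered so that $\arg(\mu_1)\le\cdots\le\arg(\mu_n)$, and assume $\zeta(Q):=\frac1{2\pi}\sum_{j=1}^n\arg(\mu_j)\ge0$. Let $m(Q):=\min\{\|X\|_\phi^2:X\in\mathfrak{su}_n,\ \exp(X)=Q\}$ and $\Theta(Q):=\{X\in\mathfrak{su}_n:\exp(X)=Q,\ \|X\|_\phi^2=m(Q)\}$. Let $X_0\in\mathfrak{su}_n$ with $\exp(X_0)=Q$ whose $n$ eigenvalues are $(\arg(\mu_1)+2h_1\pi)\mathbf{i},\dots,(\arg(\mu_n)+2h_n\pi)\mathbf{i}$, where $h_1,\dots,h_n\in\mathbb{Z}$ and $\sum_{j=1}^nh_j=-\zeta(Q)$. (a) If $\zeta(Q)=0$, then $m(Q)=\sum_{j=1}^n(\arg(\mu_j))^2$, and $X_0\in\Theta(Q)$ if and only if $h_j=0$ for all $j\in\{1,\dots,n\}$. (b) If $\zeta(Q)\ge1$, then $m(Q)=\sum_{j=1}^{n-\zeta(Q)}(\arg(\mu_j))^2+\sum_{j=n-\zeta(Q)+1}^n(2\pi-\arg(\mu_j))^2$. Moreover, if $\mu_{n-\zeta(Q)}\ne\mu_{n-\zeta(Q)+1}$, then $X_0\in\Theta(Q)$ if and only if $h_j=0$ for all $j\in\{1,\dots,n-\zeta(Q)\}$ and $h_l=-1$ for all $l\in\{n-\zeta(Q)+1,\dots,n\}$; while if $\mu_{n-\zeta(Q)}=\mu_{n-\zeta(Q)+1}$,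 then $X_0\in\Theta(Q)$ if and only if $h_r=0$ for every $r\in\{1,\dots,n-\zeta(Q)-1\}$ with $\mu_r\ne\mu_{n-\zeta(Q)}$, $h_t=-1$ for every $t\in\{n-\zeta(Q)+2,\dots,n\}$ with $\mu_t\ne\mu_{n-\zeta(Q)}$, and $h_m\in\{0,-1\}$ for every index $m$ with $\mu_m=\mu_{n-\zeta(Q)}$ (subject to the constraint $\sum_{j=1}^nh_j=-\zeta(Q)$).
   Context: $SU_n$ is the special unitary group, $\mathfrak{su}_n$ its Lie algebra of traceless skew-Hermitian matrices, $\exp$ the matrix exponential, $\|X\|_\phi=\sqrt{\mathrm{tr}(XX^* )}$ the Frobenius norm, and $\arg(z)\in(-\pi,\pi]$ the principal argument. Note $\zeta(Q)$ is an integer. *)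

(* Defs.v *)
From HB Require Import structures.
From mathcomp Require Import all_boot all_order all_algebra.
From mathcomp Require Import all_classical all_reals.
From mathcomp Require Import topology normedtype sequences trigo.
From mathcomp Require Import complex.
Set Implicit Arguments. Unset Strict Implicit. Unset Printing Implicit Defensive.
Import Order.TTheory GRing.Theory Num.Theory numFieldNormedType.Exports.
Local Open Scope ring_scope.
Local Open Scope classical_set_scope.

Section Defs.
Variable R : realType.
Local Notation C := (R[i]).

Definition conjz (z : C) : C := Complex (complex.Re z) (- complex.Im z).

Definition cadj n (X : 'M[C]_n) : 'M[C]_n := (map_mx conjz X)^T.

Definition modz (z : C) : R := Num.sqrt (complex.Re z ^+ 2 + complex.Im z ^+ 2).

(* principal argument, with values in (-pi, pi]  (arg 0 is irrelevant here) *)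
Definition argz (z : C) : R :=
  if 0 <= complex.Im z then acos (complex.Re z / modz z) else - acos (complex.Re z / modz z).

Definition exp_psum n (X : 'M[C]_n) (N : nat) : 'M[C]_n :=
  \sum_(k < N) ((k`!)%:R)^-1 *: X ^+ k.

Definition mexp n (X : 'M[C]_n) : 'M[C]_n :=
  \matrix_(i, j) Complex (limn (fun N => complex.Re (exp_psum X N i j)))
                         (limn (fun N => complex.Im (exp_psum X N i j))).

Definition SU n (Q : 'M[C]_n) : Prop := Q *m cadj Q = 1%:M /\ \det Q = 1.

Definition su n (X : 'M[C]_n) : Prop := cadj X = - X /\ \tr X = 0.

Definition frob2 n (X : 'M[C]_n) : R := complex.Re (\tr (X *m cadj X)).

(* m(Q) = min { ||X||^2 : X in su_n, exp X = Q } (taken as the infimum) *)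
Definition mQ n (Q : 'M[C]_n) : R :=
  inf [set frob2 X | X in [set X : 'M[C]_n | su X /\ mexp X = Q]].

Definition Theta n (Q : 'M[C]_n) : set 'M[C]_n :=
  [set X | su X /\ mexp X = Q /\ frob2 X = mQ Q].

(* zeta(Q) computed from a (1-based) listing mu_1..mu_n of the eigenvalues *)
Definition zeta n (mu : nat -> C) : R :=
  (2 * pi)^-1 * \sum_(1 <= j < n.+1) argz (mu j).

End Defs.

(* Main.v *)
Require Import Defs.
From HB Require Import structures.
From mathcomp Require Import all_boot all_order all_algebra.
From mathcomp Require Import all_classical all_reals.
From mathcomp Require Import topology normedtype sequences trigo.
From mathcomp Require Import complex.
From mathcomp Require Import spectral perm.
From mathcomp Require Import ring lra zify.
Set Implicit Arguments. Unset Strict Implicit. Unset Printing Implicit Defensive.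
Import Order.TTheory GRing.Theory Num.Theory numFieldNormedType.Exports.
Local Open Scope ring_scope.
Local Open Scope classical_set_scope.
Section Trig.
Variable R : realType.
Local Notation C := R[i].
Local Notation pi := (@pi R).

Definition expi (t : R) : C := Complex (cos t) (sin t).

Lemma periodicz (f : R -> R) (T : R) : periodic f T ->
  forall (m : int) (a : R), f (a + T * m%:~R) = f a.
Proof.
move=> fT [] n a.
  by rewrite -[(Posz n)%:~R]/(n%:R) mulr_natr (periodicn fT).
rewrite NegzE mulrNz -[(Posz n.+1)%:~R]/(n.+1%:R) mulrN mulr_natr.
by rewrite -{2}[a](subrK (T *+ n.+1)) (periodicn fT).
Qed.

Lemma expi_per (t : R) (m : int) : expi (t + pi *+ 2 * m%:~R) = expi t.
Proof.
by rewrite /expi (periodicz (@cosD2pi R)) (periodicz (@sinD2pi R)).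
Qed.

Lemma modz_expi t : Defs.modz (expi t) = 1.
Proof. by rewrite /Defs.modz /= cos2Dsin2 sqrtr1. Qed.

Lemma argz_expi (t : R) : - pi < t <= pi -> argz (expi t) = t.
Proof.
move=> /andP[h1 h2]; rewrite /argz modz_expi divr1 /=.
have pi0 := pi_gt0 R.
case: (leP 0 t) => t0.
  have -> : 0 <= sin t by apply: sin_ge0_pi; rewrite t0 h2.
  by rewrite cosK // in_itv /= t0 h2.
have -> : (0 <= sin t) = false.
  apply/negbTE; rewrite -ltNge -oppr_gt0 -sinN; apply: sin_gt0_pi.
  by rewrite oppr_gt0 t0 /= ltrNl.
rewrite cosKN ?opprK // (ltW t0) andbT ltW //.
Qed.

Definition redz (l : R) : int := Num.ceil ((l - pi) / (pi *+ 2)).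

Lemma expi_redz (l : R) :
  l = argz (expi l) + pi *+ 2 * (redz l)%:~R /\ - pi < argz (expi l) <= pi.
Proof.
have pi0 := pi_gt0 R.
have := ceil_itv ((l - pi) / (pi *+ 2)); rewrite -/(redz l).
set m := redz l => /andP[c1 c2].
have p2 : 0 < pi *+ 2 by rewrite mulr2n; lra.
set u := l - pi *+ 2 * m%:~R.
have hu : - pi < u <= pi.
  rewrite /u; apply/andP; split.
    move: c1; rewrite ltr_pdivlMr // intrB mulrBl mul1r => c1.
    by rewrite mulrC; lra.
  by move: c2; rewrite ler_pdivrMr // => c2; rewrite mulrC; lra.
have eu : expi l = expi u by rewrite /u -[RHS](expi_per _ m) subrK.
rewrite eu argz_expi // hu; split => //.
by rewrite /u subrK.
Qed.

Lemma expi_red (l : R) : exists m : int,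
  l = argz (expi l) + pi *+ 2 * m%:~R /\ - pi < argz (expi l) <= pi.
Proof. by exists (redz l); exact: expi_redz. Qed.

Lemma expi_argz_expi l : expi (argz (expi l)) = expi l.
Proof.
have [m [e _]] := expi_red l.
by rewrite {2}e expi_per.
Qed.

Lemma expi_inj (a b : R) : - pi < a <= pi -> - pi < b <= pi -> expi a = expi b -> a = b.
Proof. by move=> ha hb e; rewrite -(argz_expi ha) -(argz_expi hb) e. Qed.

End Trig.
Section Comb.
Variable R : realType.
Local Notation pi := (@pi R).

Definition Ef (a t : R) (g : int) : R := g%:~R * (t - a + pi * (g%:~R + 1)).

Lemma int_cases (g : int) : [\/ 1 <= g, g = 0, g = -1 | g <= -2].
Proof.
have : (1 <= g) || (g == 0) || (g == -1) || (g <= -2) by lia.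
case/orP=> [/orP[/orP[?|/eqP?]|/eqP?]|?]; by [constructor 1|constructor 2|constructor 3|constructor 4].
Qed.

Lemma Ef_lo (a t : R) (g : int) : - pi < t -> a <= pi -> t <= a ->
  0 <= Ef a t g /\ (Ef a t g = 0 -> g = 0 \/ (g = -1 /\ t = a)).
Proof.
move=> h1 h2 h3; have pi0 := pi_gt0 R; rewrite /Ef.
case: (int_cases g) => [g1|->|->|g2].
- have x1 : 1 <= g%:~R :> R by rewrite ler1z.
  have q : 0 < t - a + pi * (g%:~R + 1) by nra.
  have p : 0 < g%:~R * (t - a + pi * (g%:~R + 1)) by apply: mulr_gt0 => //; lra.
  by split; [exact: ltW| move=> e; rewrite e ltxx in p].
- by rewrite mul0r; split => //; left.
- rewrite addNr mulr0 addr0 mulN1r; split; first by lra.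
  by move=> e; right; split => //; lra.
- have x2 : g%:~R <= -2 :> R by rewrite -[-2]/((-2)%:~R) ler_int.
  have q : t - a + pi * (g%:~R + 1) < 0 by nra.
  have p : 0 < g%:~R * (t - a + pi * (g%:~R + 1)) by nra.
  by split; [exact: ltW| move=> e; rewrite e ltxx in p].
Qed.

Lemma Ef_hi (a t : R) (g : int) : - pi < a -> t <= pi -> a <= t ->
  a - t <= Ef a t g /\ (Ef a t g = a - t -> g = -1 \/ (g = 0 /\ t = a)).
Proof.
move=> h1 h2 h3; have pi0 := pi_gt0 R; rewrite /Ef.
case: (int_cases g) => [g1|->|->|g2].
- have x1 : 1 <= g%:~R :> R by rewrite ler1z.
  have w : 0 <= pi * (g%:~R - 1) by apply: mulr_ge0; lra.
  have q : 0 < t - a + pi * g%:~R by lra.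
  have e : g%:~R * (t - a + pi * (g%:~R + 1)) - (a - t) = (g%:~R + 1) * (t - a + pi * g%:~R) by ring.
  have r : 0 < (g%:~R + 1) * (t - a + pi * g%:~R) by apply: mulr_gt0 => //; lra.
  have p : a - t < g%:~R * (t - a + pi * (g%:~R + 1)) by lra.
  by split; [exact: ltW| move=> e'; rewrite e' ltxx in p].
- rewrite mul0r; split; first by lra.
  by move=> e; right; split => //; lra.
- by rewrite addNr mulr0 addr0 mulN1r opprB; split => //; left.
- have x2 : g%:~R <= -2 :> R by rewrite -[-2]/((-2)%:~R) ler_int.
  have w : pi * (g%:~R + 2) <= 0 by apply: mulr_ge0_le0; lra.
  have q : t - a + pi * g%:~R < 0 by lra.
  have e : g%:~R * (t - a + pi * (g%:~R + 1)) - (a - t) = (g%:~R + 1) * (t - a + pi * g%:~R) by ring.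
  have r : 0 < (g%:~R + 1) * (t - a + pi * g%:~R) by nra.
  have p : a - t < g%:~R * (t - a + pi * (g%:~R + 1)) by lra.
  by split; [exact: ltW| move=> e'; rewrite e' ltxx in p].
Qed.

End Comb.
Section Comb2.
Variable R : realType.
Local Notation pi := (@pi R).

Lemma sum_nat_ge0_eq0 (m p : nat) (F : nat -> R) :
  (forall j, (m <= j < p)%N -> 0 <= F j) -> \sum_(m <= j < p) F j = 0 ->
  forall j, (m <= j < p)%N -> F j = 0.
Proof.
elim: p => [|p IH] hF hs j hj; first by move: hj; rewrite ltn0 andbF.
case: (leqP m p) => hmp; last first.
  by exfalso; move: hj => /andP[h1 h2]; move: (leq_ltn_trans h1 h2); rewrite ltnS leqNgt hmp.
move: hs; rewrite big_nat_recr //= => /eqP; rewrite paddr_eq0; first last.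
- by apply: hF; rewrite hmp ltnSn.
- rewrite big_nat_cond; apply: sumr_ge0 => i /andP[/andP[h1 h2] _].
  by apply: hF; rewrite h1 ltnW.
case/andP=> /eqP h1 /eqP h2.
move: hj => /andP[hj1]; rewrite ltnS leq_eqVlt => /orP[/eqP->//|hj2].
apply: IH => //; last by rewrite hj1.
by move=> i /andP[i1 i2]; apply: hF; rewrite i1 ltnS ltnW.
Qed.

Variables (n k : nat) (th : nat -> R) (G : nat -> int).
Hypothesis hk : (k < n)%N.
Hypothesis hs : forall i j, (1 <= i)%N -> (i <= j)%N -> (j <= n)%N -> th i <= th j.
Hypothesis hr : forall j, (1 <= j <= n)%N -> - pi < th j <= pi.

Definition Sstar := \sum_(1 <= j < (n - k).+1) (th j) ^+ 2
            + \sum_(n - k + 1 <= j < n.+1) (2 * pi - th j) ^+ 2.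
Definition Dd (j : nat) : R := Ef (th (n - k)) (th j) (G j)
   - (if (j <= n - k)%N then 0 else th (n - k) - th j).

Lemma split_sum (F1 F2 : nat -> R) :
  \sum_(1 <= j < (n - k).+1) F1 j + \sum_(n - k + 1 <= j < n.+1) F2 j
  = \sum_(1 <= j < n.+1) (if (j <= n - k)%N then F1 j else F2 j).
Proof.
rewrite [RHS](big_cat_nat _ (n := (n - k).+1)) //=; last by rewrite ltnS leq_subr.
rewrite addn1; congr (_ + _); apply: eq_big_nat => j /andP[h1 h2].
  by rewrite -ltnS h2.
by rewrite leqNgt h1.
Qed.

Lemma comb_ident : \sum_(1 <= j < n.+1) G j = - (k%:Z) ->
  \sum_(1 <= j < n.+1) (th j + 2 * (G j)%:~R * pi) ^+ 2
  = Sstar + 4 * pi * \sum_(1 <= j < n.+1) Dd j.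
Proof.
move=> hG.
set a := th (n - k).
have e : forall j, (th j + 2 * (G j)%:~R * pi) ^+ 2 =
   (if (j <= n - k)%N then th j ^+ 2 else (2 * pi - th j) ^+ 2) + 4 * pi * Dd j
   + 4 * pi * (a - pi) * ((G j)%:~R + (if (j <= n - k)%N then 0 else 1)).
  by move=> j; rewrite /Dd /Ef -/a; case: ifP => _; ring.
rewrite (eq_bigr _ (fun j _ => e j)) !big_split /= -!mulr_sumr -split_sum -/Sstar.
have hG' : \sum_(1 <= i < n.+1) ((G i)%:~R : R) = - k%:R.
  have := congr1 (fun z : int => z%:~R : R) hG; rewrite /= rmorph_sum => ->.
  by rewrite mulrNz.
rewrite [X in _ + _ * X = _]big_split /= hG'.
have -> : \sum_(1 <= i < n.+1) (if (i <= n - k)%N then 0 else 1) = k%:R :> R.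
  rewrite -(split_sum (fun _ => 0) (fun _ => 1)) big1 ?add0r // sumr_const_nat.
  by rewrite addn1 subSS subKn // ltnW.
rewrite addNr mulr0 addr0; congr (_ + _ * _).
by rewrite /Dd big_split.
Qed.

Lemma Dd_ge0 j : (1 <= j <= n)%N -> 0 <= Dd j /\
  (Dd j = 0 <-> (((j <= n - k)%N /\ (G j = 0 \/ (G j = -1 /\ th j = th (n - k)))) \/
                 ((n - k < j)%N /\ (G j = -1 \/ (G j = 0 /\ th j = th (n - k)))))).
Proof.
move=> /andP[j1 jn].
have nk1 : (1 <= n - k)%N by rewrite subn_gt0.
have /andP[a1 a2] : - pi < th (n - k) <= pi by apply: hr; rewrite nk1 leq_subr.
have /andP[t1 t2] : - pi < th j <= pi by apply: hr; rewrite j1 jn.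
rewrite /Dd; case: (leqP j (n - k)) => hj.
  have := Ef_lo (G j) t1 a2 (hs j1 hj (leq_subr _ _)) => -[h1 h2].
  rewrite subr0; split => //; split.
    by move/h2 => h; left.
  case=> -[] // _ [->|[-> ->]]; rewrite /Ef ?mul0r //.
  by rewrite addNr mulr0 addr0 subrr mulr0.
have := Ef_hi (G j) a1 t2 (hs nk1 (ltnW hj) jn) => -[h1 h2].
split; first by rewrite subr_ge0.
split.
  by move/eqP; rewrite subr_eq0 => /eqP /h2 h; right.
case=> -[] // _ [->|[-> ->]]; rewrite /Ef.
  by rewrite addNr mulr0 addr0 mulN1r opprB subrr.
by rewrite mul0r !subrr.
Qed.

Lemma count_hi : \sum_(1 <= i < n.+1) (if (i <= n - k)%N then 0 else 1) = k%:R :> R.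
Proof.
rewrite -(split_sum (fun _ => 0) (fun _ => 1)) big1 ?add0r // sumr_const_nat.
by rewrite addn1 subSS subKn // ltnW.
Qed.

Lemma sum_split (F : nat -> R) : \sum_(1 <= j < n.+1) F j =
  \sum_(1 <= j < (n - k).+1) F j + \sum_(n - k + 1 <= j < n.+1) F j.
Proof. by rewrite split_sum; apply: eq_bigr => j _; case: ifP. Qed.

End Comb2.
Section Exp.
Variable R : realType.
Local Notation C := R[i].
Local Notation Re := (@complex.Re R).
Local Notation Im := (@complex.Im R).

Lemma ReM (x y : C) : Re (x * y) = Re x * Re y - Im x * Im y.
Proof. by case: x => a b; case: y => c d. Qed.
Lemma ImM (x y : C) : Im (x * y) = Re x * Im y + Im x * Re y.
Proof. by case: x => a b; case: y => c d. Qed.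
Lemma ReD (x y : C) : Re (x + y) = Re x + Re y.
Proof. by case: x => a b; case: y => c d. Qed.
Lemma ImD (x y : C) : Im (x + y) = Im x + Im y.
Proof. by case: x => a b; case: y => c d. Qed.

Definition ccvg (u : nat -> C) (z : C) :=
  ((fun N => Re (u N)) @ \oo --> Re z) /\ ((fun N => Im (u N)) @ \oo --> Im z).

Lemma cvg_eqf (f g : nat -> R) (l : R) : (forall N, f N = g N) ->
  f @ \oo --> l -> g @ \oo --> l.
Proof. by move=> e; have -> : g = f by apply: funext => N; rewrite e. Qed.

Lemma ccvg_cst a : ccvg (fun _ => a) a.
Proof. by split; apply: cvg_cst. Qed.

Lemma ccvgD u v a b : ccvg u a -> ccvg v b -> ccvg (fun N => u N + v N) (a + b).
Proof.
move=> [h1 h2] [h3 h4]; split.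
  by rewrite ReD; apply: cvg_eqf (cvgD h1 h3) => N; rewrite ReD.
by rewrite ImD; apply: cvg_eqf (cvgD h2 h4) => N; rewrite ImD.
Qed.

Lemma ccvgMl (c : C) u a : ccvg u a -> ccvg (fun N => c * u N) (c * a).
Proof.
move=> [h1 h2]; split.
  rewrite ReM; apply: cvg_eqf (cvgB (cvgM (cvg_cst (Re c)) h1) (cvgM (cvg_cst (Im c)) h2)) => N.
  by rewrite ReM.
rewrite ImM; apply: cvg_eqf (cvgD (cvgM (cvg_cst (Re c)) h2) (cvgM (cvg_cst (Im c)) h1)) => N.
by rewrite ImM.
Qed.

Lemma ccvg_sum (I : Type) (r : seq I) (u : I -> nat -> C) (z : I -> C) :
  (forall i, ccvg (u i) (z i)) ->
  ccvg (fun N => \sum_(i <- r) u i N) (\sum_(i <- r) z i).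
Proof.
move=> h; elim: r => [|x r IH].
  by split; apply: cvg_eqf (cvg_cst _) => N; rewrite !big_nil.
rewrite big_cons; have [h1 h2] := ccvgD (h x) IH.
by split; [apply: cvg_eqf h1|apply: cvg_eqf h2] => N; rewrite big_cons.
Qed.

Lemma ccvg_lim u z : ccvg u z ->
  Complex (limn (fun N => Re (u N))) (limn (fun N => Im (u N))) = z.
Proof.
by case: z => a b [h1 h2]; rewrite (cvg_lim _ h1) // (cvg_lim _ h2).
Qed.

Definition spsum (z : C) (N : nat) : C := \sum_(k < N) ((k`!)%:R)^-1 * z ^+ k.

Lemma iexp2 (l : R) m :
  (Complex 0 l) ^+ (m.*2) = Complex ((-1) ^+ m * l ^+ (m.*2)) 0.
Proof.
elim: m => [|m IH]; first by rewrite !expr0 mul1r.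
rewrite doubleS !exprS IH; apply/eqP; rewrite eq_complex /=; apply/andP; split; apply/eqP.
  by ring.
by ring.
Qed.

Lemma iexp2S (l : R) m :
  (Complex 0 l) ^+ (m.*2.+1) = Complex 0 ((-1) ^+ m * l ^+ (m.*2.+1)).
Proof.
rewrite exprS iexp2; apply/eqP; rewrite eq_complex /=; apply/andP; split; apply/eqP.
  by ring.
by rewrite exprS; ring.
Qed.

Lemma invfact (k : nat) : ((k`!)%:R : C)^-1 = Complex ((k`!)%:R^-1) 0.
Proof.
have -> : ((k`!)%:R : C) = Complex ((k`!)%:R) 0.
  by rewrite -[Complex _ 0]/(real_complex R _) rmorph_nat.
by rewrite -[Complex _ 0]/(real_complex R _) -[Complex (_^-1) 0]/(real_complex R _) fmorphV.
Qed.

Lemma even_odd (n : nat) : {m | n = m.*2} + {m | n = m.*2.+1}.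
Proof.
case h: (odd n); [right|left]; exists n./2;
by rewrite -[LHS]odd_double_half h.
Qed.

Lemma Re_term l k : Re (((k`!)%:R)^-1 * (Complex 0 l) ^+ k) = cos_coeff l k.
Proof.
rewrite invfact cos_coeffE /=; case: (even_odd k) => -[m ->].
  by rewrite iexp2 /= odd_double doubleK /=; ring.
by rewrite iexp2S /= odd_double /=; ring.
Qed.

Lemma Im_term l k : Im (((k`!)%:R)^-1 * (Complex 0 l) ^+ k) = sin_coeff l k.
Proof.
rewrite invfact sin_coeffE /=; case: (even_odd k) => -[m ->].
  by rewrite iexp2 /= odd_double /=; ring.
by rewrite iexp2S /= odd_double /= doubleK; ring.
Qed.

Lemma ccvg_exp (l : R) : ccvg (spsum (Complex 0 l)) (expi l).
Proof.
split.
  rewrite /expi /= cos.unlock; apply: cvg_eqf (@is_cvg_series_cos_coeff R l) => N.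
  rewrite /spsum /series /= big_mkord raddf_sum.
  by apply: eq_bigr => k _; exact: (esym (Re_term l k)).
rewrite /expi /= sin.unlock; apply: cvg_eqf (@is_cvg_series_sin_coeff R l) => N.
rewrite /spsum /series /= big_mkord raddf_sum.
by apply: eq_bigr => k _; exact: (esym (Im_term l k)).
Qed.

End Exp.
Section Mx.
Variable R : realType.
Local Notation C := R[i].
Local Notation Re := (@complex.Re R).
Local Notation Im := (@complex.Im R).
Local Open Scope sesquilinear_scope.

Lemma conjzE (z : C) : conjz z = z^*.
Proof. by case: z. Qed.

Lemma cadjE n (X : 'M[C]_n) : cadj X = X ^t*.
Proof.
by rewrite /cadj; apply/matrixP => i j; rewrite !mxE conjzE.
Qed.

Variable n : nat.

Definition cD (P : 'M[C]_n) (d : 'rV[C]_n) : 'M[C]_n := P ^t* *m diag_mx d *m P.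

Lemma unitary_l (P : 'M[C]_n) : P \is unitarymx -> P *m P ^t* = 1%:M.
Proof. by move/unitarymxP. Qed.
Lemma unitary_r (P : 'M[C]_n) : P \is unitarymx -> P ^t* *m P = 1%:M.
Proof. by move/unitarymxP/mulmx1C. Qed.

Lemma cD_entry P d i j : cD P d i j = \sum_c (P ^t* i c * d 0 c) * P c j.
Proof. by rewrite /cD mxE; apply: eq_bigr => c _; rewrite mul_mx_diag mxE. Qed.

Lemma diag_mxM (d e : 'rV[C]_n) :
  diag_mx d *m diag_mx e = diag_mx (\row_c (d 0 c * e 0 c)).
Proof.
apply/matrixP => i j; rewrite mul_diag_mx !mxE.
by case: eqP => [->|]; rewrite ?mulr1n ?mulr0n ?mulr0.
Qed.

Lemma cDM P d e : P \is unitarymx ->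
  cD P d *m cD P e = cD P (\row_c (d 0 c * e 0 c)).
Proof.
move=> uP; rewrite /cD.
have -> : P ^t* *m diag_mx d *m P *m (P ^t* *m diag_mx e *m P) =
  P ^t* *m (diag_mx d *m (P *m P ^t*) *m diag_mx e) *m P by rewrite !mulmxA.
by rewrite (unitary_l uP) mulmx1 diag_mxM.
Qed.

Lemma cD1 P : P \is unitarymx -> cD P (\row_c 1) = 1%:M.
Proof.
move=> uP; rewrite /cD.
have -> : diag_mx (\row_c (1 : C)) = 1%:M :> 'M[C]_n.
  by rewrite -diag_const_mx; congr diag_mx; apply/rowP => c; rewrite !mxE.
by rewrite mulmx1 unitary_r.
Qed.

Lemma cD_exp P d k : P \is unitarymx ->
  (cD P d) ^+ k = cD P (\row_c (d 0 c ^+ k)).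
Proof.
move=> uP; elim: k => [|k IH].
  rewrite expr0 -[1 : 'M_n]/(1%:M) -(cD1 uP); congr cD; apply/rowP => c; rewrite !mxE.
rewrite exprS IH.
have -> : cD P d * cD P (\row_c d 0 c ^+ k) = cD P d *m cD P (\row_c d 0 c ^+ k) by [].
rewrite (cDM _ _ uP); congr cD; apply/rowP => c; rewrite !mxE.
by rewrite exprS.
Qed.

Lemma exp_psum_cD P d N : P \is unitarymx ->
  exp_psum (cD P d) N = cD P (\row_c spsum (d 0 c) N).
Proof.
move=> uP; rewrite /exp_psum.
under eq_bigr => k _ do rewrite cD_exp // /cD scalemxAl scalemxAr.
rewrite -mulmx_suml -mulmx_sumr /cD; congr (_ *m _ *m _).
apply/matrixP => a b; rewrite summxE !mxE /spsum.
under eq_bigr => k _ do rewrite !mxE.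
case: (eqVneq a b) => [->|_].
  by apply: eq_bigr => k _; rewrite mulr1n.
by rewrite mulr0n big1 // => k _; rewrite mulr0n mulr0.
Qed.

Lemma mexp_cD P (lam : 'I_n -> R) : P \is unitarymx ->
  mexp (cD P (\row_c Complex 0 (lam c))) = cD P (\row_c expi (lam c)).
Proof.
move=> uP; apply/matrixP => i j; rewrite /mexp mxE.
rewrite -[RHS](@ccvg_lim _ (fun N => exp_psum (cD P (\row_c Complex 0 (lam c))) N i j)) //.
rewrite cD_entry.
have e : forall N, exp_psum (cD P (\row_c Complex 0 (lam c))) N i j =
   \sum_c (P ^t* i c * P c j) * spsum (Complex 0 (lam c)) N.
  move=> N; rewrite exp_psum_cD // cD_entry; apply: eq_bigr => c _; rewrite !mxE.
  by rewrite mulrAC.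
have h : ccvg (fun N => \sum_c (P ^t* i c * P c j) * spsum (Complex 0 (lam c)) N)
               (\sum_c (P ^t* i c * P c j) * expi (lam c)).
  by apply: ccvg_sum => c; apply: ccvgMl; apply: ccvg_exp.
have -> : \sum_c P ^t* i c * (\row_c expi (lam c)) 0 c * P c j =
          \sum_c (P ^t* i c * P c j) * expi (lam c).
  by apply: eq_bigr => c _; rewrite mxE mulrAC.
by case: h => h1 h2; split; [apply: cvg_eqf h1|apply: cvg_eqf h2] => N; rewrite e.
Qed.

End Mx.
Section Mx2.
Variable R : realType.
Local Notation C := R[i].
Local Notation Re := (@complex.Re R).
Local Notation Im := (@complex.Im R).
Local Open Scope sesquilinear_scope.
Variable n : nat.

Lemma char_poly_conj (P A : 'M[C]_n) : P \in unitmx ->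
  char_poly (invmx P *m A *m P) = char_poly A.
Proof.
move=> uP; rewrite /char_poly /char_poly_mx.
set Pi := map_mx polyC (invmx P); set Pp := map_mx polyC P.
have PiPp : Pi *m Pp = 1%:M by rewrite -map_mxM mulVmx // map_mx1.
have -> : 'X%:M - map_mx polyC (invmx P *m A *m P) = Pi *m ('X%:M - map_mx polyC A) *m Pp.
  rewrite !map_mxM mulmxBr mulmxBl -/Pi -/Pp; congr (_ - _).
  by rewrite scalar_mxC -mulmxA PiPp mulmx1.
by rewrite !det_mulmx mulrAC -det_mulmx PiPp det1 mul1r.
Qed.

Lemma char_poly_cD (P : 'M[C]_n) d : P \is unitarymx ->
  char_poly (cD P d) = \prod_c ('X - (d 0 c)%:P).
Proof.
move=> uP; rewrite /cD -invmx_unitary // char_poly_conj ?unitarymx_unit //.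
rewrite char_poly_trig ?diag_mx_is_trig //.
by apply: eq_bigr => c _; rewrite mxE eqxx mulr1n.
Qed.

Lemma tr_cD (P : 'M[C]_n) d : P \is unitarymx -> \tr (cD P d) = \sum_c d 0 c.
Proof.
move=> uP; rewrite /cD mxtrace_mulC mulmxA (unitary_l uP) mul1mx mxtrace_diag.
by [].
Qed.

Lemma adj_cD (P : 'M[C]_n) d : (cD P d) ^t* = cD P (map_mx Num.Def.conjC d).
Proof.
rewrite /cD !trmx_mul !map_mxM trmxCK mulmxA.
by rewrite tr_diag_mx map_diag_mx.
Qed.

Lemma cadj_cD (P : 'M[C]_n) d : cadj (cD P d) = cD P (map_mx Num.Def.conjC d).
Proof. by rewrite cadjE adj_cD. Qed.

Lemma frob2_cD (P : 'M[C]_n) (lam : 'I_n -> R) : P \is unitarymx ->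
  frob2 (cD P (\row_c Complex 0 (lam c))) = \sum_c lam c ^+ 2.
Proof.
move=> uP; rewrite /frob2 cadj_cD (cDM _ _ uP) (tr_cD _ uP) raddf_sum /=.
by apply: eq_bigr => c _; rewrite !mxE /=; ring.
Qed.

Lemma cD_diag (P : 'M[C]_n) d : P \is unitarymx -> P *m cD P d *m P ^t* = diag_mx d.
Proof.
move=> uP; rewrite /cD !mulmxA (unitary_l uP) mul1mx -mulmxA (unitary_l uP).
exact: mulmx1.
Qed.

Lemma cD_inj (P : 'M[C]_n) d e : P \is unitarymx -> cD P d = cD P e -> d = e.
Proof.
move=> uP h.
have H : diag_mx d = diag_mx e by rewrite -(cD_diag d uP) h cD_diag.
apply/rowP => c; have := congr1 (fun M : 'M[C]_n => M c c) H.
by rewrite /= !mxE eqxx !mulr1n.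
Qed.

Lemma cDN (P : 'M[C]_n) d : cD P (- d) = - cD P d.
Proof.
rewrite /cD; have -> : diag_mx (- d) = - diag_mx d.
  by apply/matrixP => i j; rewrite !mxE mulNrn.
by rewrite mulmxN mulNmx.
Qed.

Lemma su_decomp (X : 'M[C]_n) : su X ->
  exists P (lam : 'I_n -> R), P \is unitarymx /\ X = cD P (\row_c Complex 0 (lam c)).
Proof.
case=> hadj htr.
have hX : X ^t* = - X by rewrite -cadjE hadj.
have nX : X \is normalmx.
  by apply/normalmxP; rewrite hX mulmxN mulNmx.
have uP := spectral_unitarymx X.
have eX : X = cD (spectralmx X) (spectral_diag X).
  by rewrite /cD -(invmx_unitary uP); apply/orthomx_spectralP.
move: uP eX; set P := spectralmx X; set d := spectral_diag X => uP eX.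
exists P, (fun c => Im (d 0 c)); split => //.
have h : cD P (map_mx Num.Def.conjC d) = cD P (- d).
  by rewrite -adj_cD -eX hX cDN eX.
have H := cD_inj uP h.
rewrite {1}eX; congr cD; apply/rowP => c; rewrite mxE.
have := congr1 (fun M : 'rV[C]_n => M 0 c) H; rewrite /= !mxE.
case: (d 0 c) => a b e.
move/eqP: e; rewrite eq_complex /= => /andP[/eqP h1 _].
by congr Complex; lra.
Qed.

End Mx2.
Section Match.
Variable R : realType.
Local Notation C := R[i].

Lemma perm_match n (mu : nat -> C) (f : 'I_n -> C) :
  \prod_(1 <= j < n.+1) ('X - (mu j)%:P) = \prod_(c < n) ('X - (f c)%:P) ->
  exists p : 'S_n, forall i : 'I_n, mu i.+1 = f (p i).
Proof.
move=> h.
pose s := [tuple mu (val i).+1 | i < n]; pose t := [tuple f i | i < n].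
have hs : \prod_(x <- s) ('X - x%:P) = \prod_(1 <= j < n.+1) ('X - (mu j)%:P).
  rewrite big_tuple big_add1 /= big_mkord; apply: eq_bigr => i _.
  by rewrite tnth_mktuple.
have ht : \prod_(x <- t) ('X - x%:P) = \prod_(c < n) ('X - (f c)%:P).
  by rewrite big_tuple; apply: eq_bigr => i _; rewrite tnth_mktuple.
have /tuple_permP [p hp] : perm_eq s t by apply: prod_XsubC_eq; rewrite hs ht.
exists p => i.
have e : nth 0 (tval s) i = nth 0 (tval [tuple tnth t (p i0) | i0 < n]) i by rewrite hp.
by rewrite -!tnth_nth !tnth_mktuple in e.
Qed.

End Match.
Section Main.
Variable R : realType.
Local Notation C := R[i].
Local Notation pi := (@pi R).
Variables (n : nat) (Q : 'M[C]_n) (mu : nat -> C) (k : nat) (X0 : 'M[C]_n) (h : nat -> int).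
Hypothesis hn : (2 <= n)%N.
Hypothesis hQ : char_poly Q = \prod_(1 <= j < n.+1) ('X - (mu j)%:P).
Hypothesis hsort : forall i j, (1 <= i)%N -> (i <= j)%N -> (j <= n)%N -> argz (mu i) <= argz (mu j).
Hypothesis hz : zeta n mu = k%:R.
Hypothesis hsu0 : su X0.
Hypothesis hexp0 : mexp X0 = Q.
Hypothesis hX0 : char_poly X0 = \prod_(1 <= j < n.+1)
      ('X - (Complex 0 (argz (mu j) + 2 * (h j)%:~R * pi))%:P).
Hypothesis hh : \sum_(1 <= j < n.+1) h j = - (k%:Z).

Local Notation th := (fun j => argz (mu j)).

Lemma sum1n (F : nat -> R) : \sum_(1 <= j < n.+1) F j = \sum_(i < n) F i.+1.
Proof. by rewrite big_add1 /= big_mkord. Qed.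

Lemma L_X_mu (X : 'M[C]_n) : su X -> mexp X = Q ->
  exists P (lam : 'I_n -> R) (p : 'S_n), P \is unitarymx /\
    X = cD P (\row_c Complex 0 (lam c)) /\ forall i : 'I_n, mu i.+1 = expi (lam (p i)).
Proof.
move=> hsu hexp; have [P [lam [uP eX]]] := su_decomp hsu.
have : \prod_(1 <= j < n.+1) ('X - (mu j)%:P) = \prod_(c < n) ('X - (expi (lam c))%:P).
  rewrite -hQ -hexp eX mexp_cD // char_poly_cD //.
  by apply: eq_bigr => c _; rewrite mxE.
move/perm_match => [p hp].
by exists P, lam, p.
Qed.

Lemma L_unit j : (1 <= j <= n)%N -> mu j = expi (th j) /\ - pi < th j <= pi.
Proof.
move=> /andP[j1 jn].
have [P [lam [p [uP [eX hp]]]]] := L_X_mu hsu0 hexp0.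
have jlt : (j.-1 < n)%N by rewrite prednK.
have := hp (Ordinal jlt); rewrite /= prednK // => ->.
have [_ hr] := expi_redz (lam (p (Ordinal jlt))).
by rewrite expi_argz_expi; split.
Qed.

Lemma L_sumth : \sum_(1 <= j < n.+1) th j = 2 * pi * k%:R.
Proof.
have pi0 := pi_gt0 R.
move: hz; rewrite /zeta => <-.
by rewrite mulrA divff ?mul1r // mulf_neq0 // gt_eqF.
Qed.

Lemma L_k : (k < n)%N.
Proof.
have pi0 := pi_gt0 R.
have h1 : \sum_(1 <= j < n.+1) th j <= \sum_(1 <= j < n.+1) pi.
  apply: ler_sum_nat => j hj.
  by have [_ /andP[_ ->]] := L_unit hj.
rewrite sumr_const_nat subn1 /= L_sumth in h1.
have h2 : (k.*2)%:R <= n%:R :> R.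
  rewrite -mul2n natrM.
  have : (2 * k%:R) * pi <= n%:R * pi by rewrite -mulr_natl in h1; lra.
  by rewrite ler_pM2r.
rewrite ler_nat in h2.
move: h2 hn; rewrite -addnn; lia.
Qed.

Lemma L_hs : forall i j, (0 < i)%N -> (i <= j)%N -> (j <= n)%N -> th i <= th j.
Proof. exact: hsort. Qed.

Lemma L_hr : forall j, (0 < j <= n)%N -> - pi < th j <= pi.
Proof. by move=> j hj; have [_ ->] := L_unit hj. Qed.

Lemma L_frob (X : 'M[C]_n) : su X -> mexp X = Q -> exists G : nat -> int,
  \sum_(1 <= j < n.+1) G j = - (k%:Z) /\
  frob2 X = \sum_(1 <= j < n.+1) (th j + 2 * (G j)%:~R * pi) ^+ 2.
Proof.
move=> hsu hexp; have [P [lam [p [uP [eX hp]]]]] := L_X_mu hsu hexp.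
pose G (j : nat) : int := if j is j'.+1 then
   (if (j' < n)%N =P true is ReflectT hj then redz (lam (p (Ordinal hj))) else 0) else 0.
have GE : forall i : 'I_n, G i.+1 = redz (lam (p i)).
  move=> i; rewrite /G; case: eqP => [hj|]; last by rewrite ltn_ord.
  by congr (redz (lam (p _))); apply: val_inj.
have lamE : forall i : 'I_n, lam (p i) = th i.+1 + 2 * (G i.+1)%:~R * pi.
  move=> i; rewrite GE hp; have [e _] := expi_redz (lam (p i)).
  by rewrite {1}e -mulr_natl; ring.
have hsl : \sum_c lam c = 0.
  case: hsu => _; rewrite eX tr_cD // => /(congr1 (@complex.Im R)).
  by rewrite raddf_sum /=; under eq_bigr do rewrite mxE.
exists G; split; last first.
  rewrite eX frob2_cD // (reindex_inj (@perm_inj _ p)) /= sum1n.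
  by apply: eq_bigr => i _; rewrite lamE.
apply: (@intr_inj R); rewrite rmorph_sum /= sum1n.
rewrite (reindex_inj (@perm_inj _ p)) /= in hsl.
have pi0 := pi_gt0 R.
have e1 : \sum_(i < n) (th i.+1 + 2 * (G i.+1)%:~R * pi) = 0.
  by rewrite -[RHS]hsl; apply: eq_bigr => i _; rewrite lamE.
rewrite big_split /= -(sum1n th) L_sumth in e1.
have e2 : 2 * pi * (k%:R + \sum_(i < n) (G i.+1)%:~R) = 0.
  by rewrite mulrDr -[RHS]e1; congr (_ + _); rewrite mulr_sumr; apply: eq_bigr => i _; ring.
move/eqP: e2; rewrite !mulf_eq0 pnatr_eq0 /= (gt_eqF pi0) /= addr_eq0 => /eqP e3.
by rewrite mulrNz -[(k%:Z)%:~R]/(k%:R : R) e3 opprK.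
Qed.


Local Notation S := (Sstar n k th).
Local Notation DD := (Dd n k th h).

Lemma L_Dd_ge0 (G : nat -> int) j : (1 <= j <= n)%N -> 0 <= Dd n k th G j /\
  (Dd n k th G j = 0 <->
 (j <= n - k)%N /\ (G j = 0 \/ G j = -1 /\ th j = th (n - k)%N) \/
 (n - k < j)%N /\ (G j = -1 \/ G j = 0 /\ th j = th (n - k)%N)).
Proof. exact: (Dd_ge0 G L_k L_hs L_hr). Qed.

Lemma L_sumDd_ge0 (G : nat -> int) : 0 <= \sum_(1 <= j < n.+1) Dd n k th G j.
Proof.
rewrite big_nat_cond; apply: sumr_ge0 => j /andP[hj _].
by have [] := L_Dd_ge0 G hj.
Qed.

Lemma L_min (X : 'M[C]_n) : su X -> mexp X = Q -> S <= frob2 X.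
Proof.
move=> hsu hexp; have [G [hG ->]] := L_frob hsu hexp.
rewrite (comb_ident th L_k hG) lerDl; apply: mulr_ge0; last exact: L_sumDd_ge0.
by have := pi_gt0 R; lra.
Qed.

Definition gs (j : nat) : int := if (j <= n - k)%N then 0 else -1.

Lemma L_gsR : \sum_(1 <= j < n.+1) ((gs j)%:~R : R) = - k%:R.
Proof.
rewrite -(count_hi R L_k) -sumrN; apply: eq_bigr => j _; rewrite /gs.
by case: ifP => _; rewrite ?oppr0.
Qed.

Lemma L_gs : \sum_(1 <= j < n.+1) gs j = - (k%:Z).
Proof.
apply: (@intr_inj R); rewrite rmorph_sum /= L_gsR.
by rewrite mulrNz.
Qed.

Lemma L_attain : exists X, su X /\ mexp X = Q /\ frob2 X = S.
Proof.
have pi0 := pi_gt0 R.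
have [P [lam [p [uP [eX hp]]]]] := L_X_mu hsu0 hexp0.
pose lam' (c : 'I_n) := th ((p^-1)%g c).+1 + 2 * (gs ((p^-1)%g c).+1)%:~R * pi.
have lamE : forall i : 'I_n, lam' (p i) = th i.+1 + 2 * (gs i.+1)%:~R * pi.
  by move=> i; rewrite /lam' permK.
exists (cD P (\row_c Complex 0 (lam' c))); split; [split|split].
- rewrite cadj_cD -cDN; congr cD; apply/rowP => c; rewrite !mxE.
  by apply/eqP; rewrite eq_complex /= oppr0 !eqxx.
- rewrite tr_cD //; apply/eqP; rewrite eq_complex; apply/andP; split.
    by rewrite raddf_sum /= big1 // => c _; rewrite mxE.
  rewrite raddf_sum /=; apply/eqP.
  under eq_bigr do rewrite mxE /=.
  rewrite (reindex_inj (@perm_inj _ p)) /=; under eq_bigr do rewrite lamE.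
  rewrite -(sum1n (fun j => th j + 2 * (gs j)%:~R * pi)) big_split /= L_sumth.
  rewrite -mulr_suml -mulr_sumr L_gsR; ring.
- rewrite mexp_cD // -hexp0 eX mexp_cD //; congr cD; apply/rowP => c; rewrite !mxE.
  rewrite -[c](permKV p) lamE hp; set i := (p^-1)%g c.
  have -> : 2 * (gs i.+1)%:~R * pi = pi *+ 2 * (gs i.+1)%:~R by rewrite -mulr_natl; ring.
  by rewrite expi_per expi_argz_expi.
- rewrite frob2_cD // (reindex_inj (@perm_inj _ p)) /=.
  under eq_bigr do rewrite lamE.
  rewrite -(sum1n (fun j => (th j + 2 * (gs j)%:~R * pi) ^+ 2)) (comb_ident th L_k L_gs).
  rewrite big_nat_cond big1 ?mulr0 ?addr0 // => j /andP[hj _].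
  have [_ [_ H]] := L_Dd_ge0 gs hj; apply: H; rewrite /gs.
  by case: (leqP j (n - k)) => hjk; [left; split => //; left|right; split => //; left].
Qed.


Lemma L_mQ : mQ Q = S.
Proof.
have [X [hsu [hexp hf]]] := L_attain.
set E := [set frob2 X | X in [set X : 'M[C]_n | su X /\ mexp X = Q]].
have lb : lbound E S by move=> _ [Y [hsu' hexp'] <-]; exact: L_min.
have inE : E S by exists X.
have ne : E !=set0 by exists S.
apply/eqP; rewrite eq_le; apply/andP; split.
  by apply: (ge_inf _ inE); exists S.
exact: lb_le_inf.
Qed.

Lemma L_frobX0 : frob2 X0 = S + 4 * pi * \sum_(1 <= j < n.+1) DD j.
Proof.
have [P [lam [uP eX]]] := su_decomp hsu0.
have : \prod_(1 <= j < n.+1) ('X - (Complex 0 (th j + 2 * (h j)%:~R * pi))%:P)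
     = \prod_(c < n) ('X - (Complex 0 (lam c))%:P).
  by rewrite -hX0 eX char_poly_cD //; apply: eq_bigr => c _; rewrite mxE.
move/(perm_match (mu := fun j => Complex 0 (th j + 2 * (h j)%:~R * pi))) => [p hp].
rewrite eX frob2_cD // (reindex_inj (@perm_inj _ p)) /= -(comb_ident th L_k hh) sum1n.
by apply: eq_bigr => i _; case: (hp i) => ->.
Qed.

Lemma L_Theta : Theta Q X0 <-> forall j, (1 <= j <= n)%N -> DD j = 0.
Proof.
have pi0 := pi_gt0 R.
split.
  case=> _ [_]; rewrite L_frobX0 L_mQ => e.
  have /eqP : 4 * pi * \sum_(1 <= j < n.+1) DD j = 0 by lra.
  rewrite mulf_eq0 mulf_eq0 (gt_eqF pi0) /= orbF => /orP[|/eqP hs].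
    by rewrite pnatr_eq0.
  move=> j hj; apply: (sum_nat_ge0_eq0 _ hs hj) => i hi.
  by have [] := L_Dd_ge0 h hi.
move=> hall; split => //; split => //.
rewrite L_frobX0 L_mQ big_nat_cond big1 ?mulr0 ?addr0 // => j /andP[hj _].
exact: hall.
Qed.

Lemma L_Dd_h j : (1 <= j <= n)%N -> DD j = 0 -> h j = 0 \/ h j = -1.
Proof.
move=> hj /(L_Dd_ge0 h hj).2.
by case=> -[_ [->|[-> _]]]; [left|right|right|left].
Qed.

Lemma L_sum_zero (m p : nat) : (forall j, (m <= j < p)%N -> h j = 0 \/ h j = -1) ->
  \sum_(m <= j < p) ((h j)%:~R : R) = 0 -> forall j, (m <= j < p)%N -> h j = 0.
Proof.
move=> H hs j hj.
have := @sum_nat_ge0_eq0 R m p (fun j => - (h j)%:~R).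
move=> /(_ _ _ j hj) /= => e.
have : - (h j)%:~R = 0 :> R.
  apply: e; last by rewrite sumrN hs oppr0.
  by move=> i hi; case: (H i hi) => ->; rewrite ?oppr0 // opprK.
by move/eqP; rewrite oppr_eq0 intr_eq0 => /eqP.
Qed.

Lemma L_thmu i j : (1 <= i <= n)%N -> (1 <= j <= n)%N -> th i = th j -> mu i = mu j.
Proof.
move=> hi hj e; have [-> _] := L_unit hi; have [-> _] := L_unit hj.
by rewrite /= e.
Qed.


Lemma L_a : k = 0%N ->
     mQ Q = \sum_(1 <= j < n.+1) (argz (mu j)) ^+ 2 /\
     (Theta Q X0 <-> (forall j, (1 <= j <= n)%N -> h j = 0)).
Proof.
move=> k0; split.
  by rewrite L_mQ /Sstar k0 subn0 addn1 (big_geq (leqnn _)) addr0.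
rewrite L_Theta; split.
  move=> hall; apply: (@L_sum_zero 1 n.+1).
    by move=> j hj; apply: L_Dd_h => //; apply: hall.
  have := congr1 (fun z : int => z%:~R : R) hh; rewrite /= rmorph_sum => ->.
  by rewrite k0.
move=> h0 j hj; apply/(L_Dd_ge0 h hj).2; left; split.
  by rewrite k0 subn0; case/andP: hj.
by left; apply: h0.
Qed.


Lemma L_b : (1 <= k)%N ->
     mQ Q = \sum_(1 <= j < (n - k).+1) (argz (mu j)) ^+ 2
            + \sum_(n - k + 1 <= j < n.+1) (2 * pi - argz (mu j)) ^+ 2 /\
     (mu (n - k)%N != mu (n - k + 1)%N ->
        (Theta Q X0 <->
           (forall j, (1 <= j <= n - k)%N -> h j = 0) /\
           (forall l, (n - k + 1 <= l <= n)%N -> h l = -1))) /\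
     (mu (n - k)%N = mu (n - k + 1)%N ->
        (Theta Q X0 <->
           (forall r, (1 <= r <= n - k - 1)%N -> mu r != mu (n - k)%N -> h r = 0) /\
           (forall t, (n - k + 2 <= t <= n)%N -> mu t != mu (n - k)%N -> h t = -1) /\
           (forall m, (1 <= m <= n)%N -> mu m = mu (n - k)%N -> h m = 0 \/ h m = -1))).
Proof.
move=> k1; have hk := L_k.
have nk1 : (1 <= n - k <= n)%N by apply/andP; split; lia.
have nk2 : (1 <= n - k + 1 <= n)%N by apply/andP; split; lia.
split; first by rewrite L_mQ.
split.
- move=> hne.
  have hle : th (n - k)%N <= th (n - k + 1)%N by apply: hsort; lia.
  have hlt : th (n - k)%N < th (n - k + 1)%N.
    rewrite lt_neqAle hle andbT; apply/eqP => e.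
    by move: hne; rewrite (L_thmu nk1 nk2 e) eqxx.
  rewrite L_Theta; split.
  + move=> hall.
    have hl : forall l, (n - k + 1 <= l <= n)%N -> h l = -1.
      move=> l hl; have hl' : (1 <= l <= n)%N by lia.
      have := (L_Dd_ge0 h hl').2.1 (hall l hl') => -[[hle' _]|[_ [//|[_ e]]]].
        by exfalso; lia.
      have : th (n - k + 1)%N <= th l by apply: hsort; lia.
      by rewrite /= in e; rewrite /= e => H; exfalso; lra.
    split => //.
    apply: (@L_sum_zero 1 (n - k).+1).
      by move=> j hj; apply: L_Dd_h; [lia | apply: hall; lia].
    have := congr1 (fun z : int => z%:~R : R) hh; rewrite /= rmorph_sum (sum_split n k) => e.
    have e2 : \sum_(n - k + 1 <= j < n.+1) ((h j)%:~R : R) = - k%:R.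
      rewrite (@eq_big_nat _ _ _ _ _ _ (fun _ => -1)); last first.
        by move=> l hl0; rewrite hl //; lia.
      rewrite sumr_const_nat.
      have -> : (n.+1 - (n - k + 1))%N = k by lia.
      by rewrite mulNrn.
    rewrite e2 mulrNz -[(k%:Z)%:~R]/(k%:R : R) in e.
    lra.
  + case=> h0 h1 j hj; apply/(L_Dd_ge0 h hj).2.
    case: (leqP j (n - k)) => hjk.
      by left; split => //; left; apply: h0; lia.
    by right; split => //; left; apply: h1; lia.
- move=> heq; rewrite L_Theta; split.
  + move=> hall; split; [|split].
    * move=> r hr hmu; have hr' : (1 <= r <= n)%N by lia.
      have := (L_Dd_ge0 h hr').2.1 (hall r hr') => -[[_ [->//|[_ e]]]|[hlt _]].
        by exfalso; move: hmu; rewrite (L_thmu hr' nk1 e) eqxx.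
      by exfalso; lia.
    * move=> t ht hmu; have ht' : (1 <= t <= n)%N by lia.
      have := (L_Dd_ge0 h ht').2.1 (hall t ht') => -[[hle _]|[_ [->//|[_ e]]]].
        by exfalso; lia.
      by exfalso; move: hmu; rewrite (L_thmu ht' nk1 e) eqxx.
    * by move=> m hm _; exact: (L_Dd_h hm (hall m hm)).
  + case=> hr [ht hm] j hj; apply/(L_Dd_ge0 h hj).2.
    case: (eqVneq (mu j) (mu (n - k)%N)) => [e|ne].
      have eth : th j = th (n - k)%N by rewrite /= e.
      case: (hm j hj e) => hv; case: (leqP j (n - k)) => hjk.
      - by left; split => //; left.
      - by right; split => //; right.
      - by left; split => //; right.
      - by right; split => //; left.
    case: (leqP j (n - k)) => hjk.
      have hjne : j != (n - k)%N by apply: contraNneq ne => ->.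
      by left; split => //; left; apply: hr => //; lia.
    have hjne : j != (n - k + 1)%N by apply: contraNneq ne => ->; rewrite heq.
    by right; split => //; left; apply: ht => //; lia.
Qed.

End Main.

Theorem proposition2p8 (R : realType) (n : nat) (Q : 'M[R[i]]_n)
  (mu : nat -> R[i]) (k : nat) (X0 : 'M[R[i]]_n) (h : nat -> int) :
  (2 <= n)%N ->
  SU Q ->
  (* mu_1, ..., mu_n are the eigenvalues of Q with multiplicity *)
  char_poly Q = \prod_(1 <= j < n.+1) ('X - (mu j)%:P) ->
  (* ordered by nondecreasing principal argument *)
  (forall i j, (1 <= i)%N -> (i <= j)%N -> (j <= n)%N -> argz (mu i) <= argz (mu j)) ->
  (* zeta(Q) >= 0; zeta(Q) is an integer, written k *)
  zeta n mu = k%:R ->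
  (* X0 in su_n, exp X0 = Q, with eigenvalues (arg mu_j + 2 h_j pi) i *)
  su X0 -> mexp X0 = Q ->
  char_poly X0 = \prod_(1 <= j < n.+1)
      ('X - (Complex 0 (argz (mu j) + 2 * (h j)%:~R * pi))%:P) ->
  \sum_(1 <= j < n.+1) h j = - (k%:Z) ->
  (* (a) *)
  (k = 0%N ->
     mQ Q = \sum_(1 <= j < n.+1) (argz (mu j)) ^+ 2 /\
     (Theta Q X0 <-> (forall j, (1 <= j <= n)%N -> h j = 0))) /\
  (* (b) *)
  ((1 <= k)%N ->
     mQ Q = \sum_(1 <= j < (n - k).+1) (argz (mu j)) ^+ 2
            + \sum_(n - k + 1 <= j < n.+1) (2 * pi - argz (mu j)) ^+ 2 /\
     (mu (n - k)%N != mu (n - k + 1)%N ->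
        (Theta Q X0 <->
           (forall j, (1 <= j <= n - k)%N -> h j = 0) /\
           (forall l, (n - k + 1 <= l <= n)%N -> h l = -1))) /\
     (mu (n - k)%N = mu (n - k + 1)%N ->
        (Theta Q X0 <->
           (forall r, (1 <= r <= n - k - 1)%N -> mu r != mu (n - k)%N -> h r = 0) /\
           (forall t, (n - k + 2 <= t <= n)%N -> mu t != mu (n - k)%N -> h t = -1) /\
           (forall m, (1 <= m <= n)%N -> mu m = mu (n - k)%N -> h m = 0 \/ h m = -1)))).
Proof.
move=> hn _ hQ hsort hz hsu0 hexp0 hX0 hh; split.
  exact: (L_a hn hQ hsort hz hsu0 hexp0 hX0 hh).
exact: (L_b hn hQ hsort hz hsu0 hexp0 hX0 hh).
Qed.
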